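(* Let $m,\varepsilon>0$ and write $\widetilde{A}_k(x,t)=\widetilde{A}_k(x,t,m,\varepsilon)$. For each $k\in\{1,2\}$ and each $(x,t)\in\varepsilon\mathbb{Z}^2$, where $(x,t)\ne(0,0)$ if $k=1$ and $(x,t)\notin\{(-\varepsilon,0),(0,-\varepsilon)\}$ if $k=2$, $$\sqrt{1+m^2\varepsilon^2}\,\widetilde{A}_k(x,t+\varepsilon)+\sqrt{1+m^2\varepsilon^2}\,\widetilde{A}_k(x,t-\varepsilon)-\widetilde{A}_k(x+\varepsilon,t)-\widetilde{A}_k(x-\varepsilon,t)=0.$$
   Context: $\delta_{xy}$ is the Kronecker delta. For $\delta\in(0,1)$ let $A_k(x,t)=A_k(x,t,m,\varepsilon,\delta)$, $k\in\{1,2\}$, be the unique pair of complex-valued functions on $\{(x,t)\in\mathbb{R}^2:2x/\varepsilon,2t/\varepsilon,(x+t)/\varepsilon\in\mathbb{Z}\}$ satisfying: (1) for $2x/\varepsilon,2t/\varepsilon$ even, $A_1(x,t)=\frac{1}{\sqrt{1+m^2\varepsilon^2}}(A_1(x+\frac{\varepsilon}{2},t-\frac{\varepsilon}{2})+m\varepsilon A_2(x+\frac{\varepsilon}{2},t-\frac{\varepsilon}{2}))$ and $A_2(x,t)=\frac{1}{\sqrt{1+m^2\varepsilon^2}}(A_2(x-\frac{\varepsilon}{2},t-\frac{\varepsilon}{2})-m\varepsilon A_1(x-\frac{\varepsilon}{2},t-\frac{\varepsilon}{2}))+2\delta_{x0}\delta_{t0}$; (2) for $2x/\varepsilon,2t/\varepsilon$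 odd, $A_1(x,t)=\frac{1}{\sqrt{1-\delta^2}}(A_1(x+\frac{\varepsilon}{2},t-\frac{\varepsilon}{2})-i\delta A_2(x+\frac{\varepsilon}{2},t-\frac{\varepsilon}{2}))$ and $A_2(x,t)=\frac{1}{\sqrt{1-\delta^2}}(A_2(x-\frac{\varepsilon}{2},t-\frac{\varepsilon}{2})+i\delta A_1(x-\frac{\varepsilon}{2},t-\frac{\varepsilon}{2}))$; (3) $\sum_{(x,t)\in\varepsilon\mathbb{Z}^2}(|A_1|^2+|A_2|^2)<\infty$ (existence and uniqueness are known). $\widetilde{A}_k(x,t,m,\varepsilon):=\lim_{\delta\searrow0}A_k(x,t,m,\varepsilon,\delta)$ for $(x,t)\in\varepsilon\mathbb{Z}^2$ (known to exist). *)

(* Defs.v *)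
From Stdlib Require Import Reals ZArith List.
From Coquelicot Require Import Coquelicot.
Import ListNotations.

(* Lattice {(x,t) : 2x/eps, 2t/eps, (x+t)/eps in Z} is indexed by
   (a,b) in Z^2 with a+b even, via x = a*eps/2, t = b*eps/2.
   A function on the lattice is represented by f : Z -> Z -> C
   (values off the lattice are irrelevant and never used). *)
Definition on_lattice (p : Z * Z) : Prop := Z.Even (fst p + snd p).

Definition lattice_sq_summable (A1 A2 : Z -> Z -> C) : Prop :=
  exists B : R, forall l : list (Z * Z), NoDup l ->
    (forall p, In p l -> on_lattice p) ->
    fold_right (fun p acc => (Cmod (A1 (fst p) (snd p)))^2
                           + (Cmod (A2 (fst p) (snd p)))^2 + acc)%R 0%R l <= B.

(* The defining conditions (1), (2), (3) for A_k(.,.,m,eps,delta),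
   written in half-step coordinates (a,b) = (2x/eps, 2t/eps). *)
Definition is_A (m eps delta : R) (A1 A2 : Z -> Z -> C) : Prop :=
  (forall a b : Z, Z.Even a -> Z.Even b ->
     A1 a b = (RtoC (/ sqrt (1 + m^2 * eps^2)) *
               (A1 (a+1)%Z (b-1)%Z + RtoC (m * eps) * A2 (a+1)%Z (b-1)%Z))%C /\
     A2 a b = (RtoC (/ sqrt (1 + m^2 * eps^2)) *
               (A2 (a-1)%Z (b-1)%Z - RtoC (m * eps) * A1 (a-1)%Z (b-1)%Z)
               + (if (Z.eqb a 0 && Z.eqb b 0)%bool then RtoC 2 else RtoC 0))%C) /\
  (forall a b : Z, Z.Odd a -> Z.Odd b ->
     A1 a b = (RtoC (/ sqrt (1 - delta^2)) *
               (A1 (a+1)%Z (b-1)%Z - Ci * RtoC delta * A2 (a+1)%Z (b-1)%Z))%C /\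
     A2 a b = (RtoC (/ sqrt (1 - delta^2)) *
               (A2 (a-1)%Z (b-1)%Z + Ci * RtoC delta * A1 (a-1)%Z (b-1)%Z))%C) /\
  lattice_sq_summable A1 A2.

(* Main.v *)
Require Import Defs.
From Stdlib Require Import Reals ZArith List Lra Lia.
From Coquelicot Require Import Coquelicot.

Definition F0 := at_right 0.

Lemma ev01 : F0 (fun d => 0 < d < 1).
Proof.
  exists (mkposreal 1 Rlt_0_1). intros y Hy Hpos.
  unfold ball in Hy; simpl in Hy; unfold AbsRing_ball, abs, minus, plus, opp in Hy; simpl in Hy.
  split; [lra|]. rewrite Ropp_0, Rplus_0_r in Hy. apply Rabs_def2 in Hy. lra.
Qed.

Lemma limU (f : R -> C) (x y : C) :
  filterlim f F0 (locally x) -> filterlim f F0 (locally y) -> x = y.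
Proof.
  intros H1 H2. apply (@filterlim_locally_unique _ C_AbsRing C_NormedModule F0 _ f x y H1 H2).
Qed.

Lemma limP (f g : R -> C) x y :
  filterlim f F0 (locally x) -> filterlim g F0 (locally y) ->
  filterlim (fun d => (f d + g d)%C) F0 (locally (x + y)%C).
Proof.
  intros H1 H2. apply (filterlim_comp_2 f g Cplus H1 H2).
  apply (@filterlim_plus C_AbsRing C_NormedModule x y).
Qed.

Lemma limSR (h : R -> R) (f : R -> C) a x :
  filterlim h F0 (locally a) -> filterlim f F0 (locally x) ->
  filterlim (fun d => (RtoC (h d) * f d)%C) F0 (locally (RtoC a * x)%C).
Proof.
  intros H1 H2.
  apply filterlim_ext with (fun d => scal (V:=C_R_NormedModule) (h d) (f d)).
  { intros; apply scal_R_Cmult. }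
  rewrite <- scal_R_Cmult.
  apply (filterlim_comp_2 (G:=locally a) (H:=locally (x : C_R_NormedModule)) h f (fun u v => scal (V:=C_R_NormedModule) u v) H1 H2).
  apply (@filterlim_scal R_AbsRing C_R_NormedModule a x).
Qed.

Lemma limCK (k : C) (f : R -> C) x :
  filterlim f F0 (locally x) ->
  filterlim (fun d => (k * f d)%C) F0 (locally (k * x)%C).
Proof.
  intros H1. apply (filterlim_comp _ _ _ f (fun z => Cmult k z) F0 _ _ H1).
  apply (@filterlim_scal_r C_AbsRing C_NormedModule k x).
Qed.

Lemma limO (f : R -> C) x :
  filterlim f F0 (locally x) ->
  filterlim (fun d => (- f d)%C) F0 (locally (- x)%C).
Proof.
  intros H1. apply (filterlim_comp _ _ _ f Copp F0 _ _ H1).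
  apply (@filterlim_opp C_AbsRing C_NormedModule x).
Qed.

Lemma limB (f g : R -> C) x y :
  filterlim f F0 (locally x) -> filterlim g F0 (locally y) ->
  filterlim (fun d => (f d - g d)%C) F0 (locally (x - y)%C).
Proof. intros. apply limP; auto. apply limO; auto. Qed.

Lemma limK (k : C) : filterlim (fun _ : R => k) F0 (locally k).
Proof. apply filterlim_const. Qed.

Lemma limR (h : R -> R) L : filterlim h F0 (locally L) ->
  filterlim (fun d => RtoC (h d)) F0 (locally (RtoC L)).
Proof.
  intros H. apply filterlim_locally. intros eps.
  generalize (proj1 (filterlim_locally h L) H eps).
  apply filter_imp. intros x Hx. split; [exact Hx| apply ball_center].
Qed.

Lemma limd : filterlim (fun d => d) F0 (locally 0).
Proof.
  apply filterlim_locally. intros eps. exists eps. intros y Hy _. exact Hy.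
Qed.

Lemma lims : filterlim (fun d => / sqrt (1 - d^2)) F0 (locally 1).
Proof.
  assert (Hc : continuous (fun d => / sqrt (1 - d^2)) 0).
  { apply (ex_derive_continuous (K:=R_AbsRing) (V:=R_NormedModule)). auto_derive. split. lra.
    split; auto. replace (1 + - (0 * (0 * 1))) with 1 by ring. rewrite sqrt_1. lra. }
  assert (E : / sqrt (1 - 0^2) = 1).
  { rewrite pow_i by lia. rewrite Rminus_0_r, sqrt_1. apply Rinv_1. }
  assert (H := filterlim_comp _ _ _ _ _ _ _ _ limd Hc).
  assert (E2 : locally (T:=R_UniformSpace) (/ sqrt (1-0^2)) = locally 1) by (f_equal; exact E).
  exact (eq_rect _ (fun l => filterlim (fun d => / sqrt (1 - d^2)) F0 (locally l)) H _ E).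
Qed.

Lemma Dzero (i j : Z) : (i, j) <> (0%Z, 0%Z) ->
  (if ((2*i =? 0)%Z && (2*j =? 0)%Z)%bool then RtoC 2 else RtoC 0) = RtoC 0.
Proof.
  intros H. destruct (Z.eqb_spec (2*i) 0), (Z.eqb_spec (2*j) 0); simpl; auto.
  exfalso; apply H; f_equal; lia.
Qed.

Theorem proposition5 (m eps : R) (hm : 0 < m) (heps : 0 < eps)
  (A1 A2 : R -> Z -> Z -> C) (At1 At2 : Z -> Z -> C) :
  (forall d : R, 0 < d < 1 -> is_A m eps d (A1 d) (A2 d)) ->
  (forall i j : Z,
     filterlim (fun d => A1 d (2*i)%Z (2*j)%Z) (at_right 0) (locally (At1 i j))) ->
  (forall i j : Z,
     filterlim (fun d => A2 d (2*i)%Z (2*j)%Z) (at_right 0) (locally (At2 i j))) ->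
  (forall i j : Z, (i, j) <> (0%Z, 0%Z) ->
     (RtoC (sqrt (1 + m^2 * eps^2)) * At1 i (j+1)%Z
      + RtoC (sqrt (1 + m^2 * eps^2)) * At1 i (j-1)%Z
      - At1 (i+1)%Z j - At1 (i-1)%Z j)%C = RtoC 0) /\
  (forall i j : Z, (i, j) <> ((-1)%Z, 0%Z) -> (i, j) <> (0%Z, (-1)%Z) ->
     (RtoC (sqrt (1 + m^2 * eps^2)) * At2 i (j+1)%Z
      + RtoC (sqrt (1 + m^2 * eps^2)) * At2 i (j-1)%Z
      - At2 (i+1)%Z j - At2 (i-1)%Z j)%C = RtoC 0).
Proof.
  intros HA H1 H2.
  assert (Hodd1 : forall i j, filterlim (fun d => A1 d (2*i+1)%Z (2*j+1)%Z) F0 (locally (At1 (i+1)%Z j))).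
  { intros i j.
    apply filterlim_ext_loc with (fun d => (RtoC (/ sqrt (1 - d^2)) * (A1 d (2*(i+1))%Z (2*j)%Z - Ci * (RtoC d * A2 d (2*(i+1))%Z (2*j)%Z)))%C).
    - generalize ev01; apply filter_imp; intros d Hd.
      destruct (HA d Hd) as [_ [Ho _]].
      destruct (Ho (2*i+1)%Z (2*j+1)%Z) as [E _]; [exists i; ring | exists j; ring |].
      rewrite E. replace (2*i+1+1)%Z with (2*(i+1))%Z by ring.
      replace (2*j+1-1)%Z with (2*j)%Z by ring. ring.
    - replace (At1 (i+1)%Z j) with (RtoC 1 * (At1 (i+1)%Z j - Ci * (RtoC 0 * At2 (i+1)%Z j)))%C by ring.
      apply limSR; [exact lims|]. apply limB; [apply H1|]. apply limCK.
      apply limSR; [exact limd| apply H2]. }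
  assert (Hodd2 : forall i j, filterlim (fun d => A2 d (2*i+1)%Z (2*j+1)%Z) F0 (locally (At2 i j))).
  { intros i j.
    apply filterlim_ext_loc with (fun d => (RtoC (/ sqrt (1 - d^2)) * (A2 d (2*i)%Z (2*j)%Z + Ci * (RtoC d * A1 d (2*i)%Z (2*j)%Z)))%C).
    - generalize ev01; apply filter_imp; intros d Hd.
      destruct (HA d Hd) as [_ [Ho _]].
      destruct (Ho (2*i+1)%Z (2*j+1)%Z) as [_ E]; [exists i; ring | exists j; ring |].
      rewrite E. replace (2*i+1-1)%Z with (2*i)%Z by ring.
      replace (2*j+1-1)%Z with (2*j)%Z by ring. ring.
    - replace (At2 i j) with (RtoC 1 * (At2 i j + Ci * (RtoC 0 * At1 i j)))%C by ring.
      apply limSR; [exact lims|]. apply limP; [apply H2|]. apply limCK.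
      apply limSR; [exact limd| apply H1]. }
  assert (E1 : forall i j, At1 i j = (RtoC (/ sqrt (1 + m^2 * eps^2)) *
       (At1 (i+1)%Z (j-1)%Z + RtoC (m * eps) * At2 i (j-1)%Z))%C).
  { intros i j. apply (limU (fun d => A1 d (2*i)%Z (2*j)%Z)); [apply H1|].
    apply filterlim_ext_loc with (fun d => (RtoC (/ sqrt (1 + m^2 * eps^2)) *
       (A1 d (2*i+1)%Z (2*(j-1)+1)%Z + RtoC (m * eps) * A2 d (2*i+1)%Z (2*(j-1)+1)%Z))%C).
    - generalize ev01; apply filter_imp; intros d Hd.
      destruct (HA d Hd) as [He _].
      destruct (He (2*i)%Z (2*j)%Z) as [E _]; [exists i; ring | exists j; ring |].
      rewrite E. replace (2*(j-1)+1)%Z with (2*j-1)%Z by ring. reflexivity.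
    - apply limCK. apply limP; [apply Hodd1| apply limCK; apply Hodd2]. }
  assert (E2 : forall i j, At2 i j = (RtoC (/ sqrt (1 + m^2 * eps^2)) *
       (At2 (i-1)%Z (j-1)%Z - RtoC (m * eps) * At1 i (j-1)%Z)
       + (if ((2*i =? 0)%Z && (2*j =? 0)%Z)%bool then RtoC 2 else RtoC 0))%C).
  { intros i j. apply (limU (fun d => A2 d (2*i)%Z (2*j)%Z)); [apply H2|].
    apply filterlim_ext_loc with (fun d => (RtoC (/ sqrt (1 + m^2 * eps^2)) *
       (A2 d (2*(i-1)+1)%Z (2*(j-1)+1)%Z - RtoC (m * eps) * A1 d (2*(i-1)+1)%Z (2*(j-1)+1)%Z)
       + (if ((2*i =? 0)%Z && (2*j =? 0)%Z)%bool then RtoC 2 else RtoC 0))%C).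
    - generalize ev01; apply filter_imp; intros d Hd.
      destruct (HA d Hd) as [He _].
      destruct (He (2*i)%Z (2*j)%Z) as [_ E]; [exists i; ring | exists j; ring |].
      rewrite E. replace (2*(j-1)+1)%Z with (2*j-1)%Z by ring.
      replace (2*(i-1)+1)%Z with (2*i-1)%Z by ring. reflexivity.
    - apply limP; [|apply limK]. apply limCK. apply limB; [apply Hodd2|].
      apply limCK. assert (Hx := Hodd1 (i-1)%Z (j-1)%Z).
      replace (i-1+1)%Z with i in Hx by ring. exact Hx. }
  set (x := 1 + m^2 * eps^2) in *.
  assert (Hx : 0 < x) by (unfold x; nra).
  assert (Hsq : 0 < sqrt x) by (apply sqrt_lt_R0; exact Hx).
  set (S := RtoC (sqrt x)) in *. set (M := RtoC (m * eps)) in *. set (c := RtoC (/ sqrt x)) in *.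
  assert (Sc : (S * c = RtoC 1)%C).
  { unfold S, c. rewrite <- RtoC_mult. f_equal. field. lra. }
  assert (SS : (S * S = RtoC 1 + M * M)%C).
  { unfold S, M. rewrite <- !RtoC_mult, <- RtoC_plus. f_equal.
    rewrite sqrt_sqrt by lra. unfold x. ring. }
  clearbody S M c x.
  assert (E1' : forall i j, (S * At1 i j = At1 (i+1)%Z (j-1)%Z + M * At2 i (j-1)%Z)%C).
  { intros i j. rewrite (E1 i j). transitivity ((S * c) * (At1 (i+1)%Z (j-1)%Z + M * At2 i (j-1)%Z))%C; [ring|].
    rewrite Sc. ring. }
  assert (E2' : forall i j, (S * At2 i j = At2 (i-1)%Z (j-1)%Z - M * At1 i (j-1)%Z
       + S * (if ((2*i =? 0)%Z && (2*j =? 0)%Z)%bool then RtoC 2 else RtoC 0))%C).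
  { intros i j. rewrite (E2 i j).
    transitivity ((S * c) * (At2 (i-1)%Z (j-1)%Z - M * At1 i (j-1)%Z)
       + S * (if ((2*i =? 0)%Z && (2*j =? 0)%Z)%bool then RtoC 2 else RtoC 0))%C; [ring|].
    rewrite Sc. ring. }
  assert (Cancel : forall G : C, (S * G = RtoC 0)%C -> G = RtoC 0).
  { intros G HG. transitivity (c * (S * G))%C.
    - transitivity ((S * c) * G)%C; [rewrite Sc; ring| ring].
    - rewrite HG. ring. }
  split.
  - intros i j Hij. apply Cancel.
    assert (ea := E1' i (j+1)%Z). replace (j+1-1)%Z with j in ea by ring.
    assert (eb := E1' (i-1)%Z j). replace (i-1+1)%Z with i in eb by ring.
    assert (ec := E2' i j). rewrite (Dzero i j Hij) in ec.
    transitivity (M * (S * At2 i j) + (S * S) * At1 i (j-1)%Z - S * At1 (i-1)%Z j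
       + (S * At1 i (j+1)%Z - At1 (i+1)%Z j - M * At2 i j) * S)%C; [ring|].
    rewrite ea, eb, ec, SS. ring.
  - intros i j Hij1 Hij2. apply Cancel.
    assert (ea := E2' i (j+1)%Z). replace (j+1-1)%Z with j in ea by ring.
    rewrite (Dzero i (j+1)%Z) in ea by (intro h; apply Hij2; injection h; intros; f_equal; lia).
    assert (eb := E2' (i+1)%Z j). replace (i+1-1)%Z with i in eb by ring.
    rewrite (Dzero (i+1)%Z j) in eb by (intro h; apply Hij1; injection h; intros; f_equal; lia).
    assert (ec := E1' i j).
    transitivity (S * (S * At2 i (j+1)%Z) + (S * S) * At2 i (j-1)%Z - S * At2 (i+1)%Z j
       - S * At2 (i-1)%Z j)%C; [ring|].
    rewrite ea, eb.
    transitivity (- M * (S * At1 i j) + (S * S) * At2 i (j-1)%Z - At2 i (j-1)%Z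
       + M * At1 (i+1)%Z (j-1)%Z)%C; [ring|].
    rewrite ec, SS. ring.
Qed.
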